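(* Let $X$ and $Y$ be linear spaces. A function $f:X\to Y$ satisfies $$3f(x+3y)-f(3x+y)=12[f(x+y)+f(x-y)]-16[f(x)+f(y)]+12f(2y)-4f(2x)$$ for all $x,y\in X$ if and only if there exist additive functions $A,H:X\to Y$ and cubic functions $C,G:X\to Y$ such that $f(x)=H(x)+G(x)$ for all $x\in X$, where $H(x)=A(2x)-8A(x)$ and $G(x)=C(2x)-2C(x)$ for all $x\in X$.
   Context: A function $g:X\to Y$ is called additive if $g(x+y)=g(x)+g(y)$ for all $x,y\in X$. A function $g:X\to Y$ is called cubic if it satisfies $g(x+2y)-3g(x+y)+3g(x)-g(x-y)=6g(y)$ for all $x,y\in X$. *)

(* Defs.v *)
From HB Require Import structures.
From mathcomp Require Import all_boot all_order all_algebra.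
From mathcomp Require Import reals.
Set Implicit Arguments. Unset Strict Implicit. Unset Printing Implicit Defensive.
Import Order.TTheory GRing.Theory Num.Theory.
Local Open Scope ring_scope.

Definition additive_fun (R : realType) (X Y : lmodType R) (g : X -> Y) : Prop :=
  forall x y : X, g (x + y) = g x + g y.

Definition cubic_fun (R : realType) (X Y : lmodType R) (g : X -> Y) : Prop :=
  forall x y : X,
    g (x + y *+ 2) - g (x + y) *+ 3 + g x *+ 3 - g (x - y) = g y *+ 6.

(* Main.v *)
Require Import Defs.
From Stdlib Require Import ZArith.
From HB Require Import structures.
From mathcomp Require Import all_boot all_order all_algebra.
From mathcomp Require Import reals.
Import Order.TTheory GRing.Theory Num.Theory.
Local Open Scope ring_scope.
From mathcomp Require Import zify ring.
From mathcomp Require Import ssrZ.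
Import Order.TTheory GRing.Theory Num.Theory.
Local Open Scope ring_scope.

Section Lin.
Variable V : zmodType.
Definition Lz (s : seq V) (p : {poly int}) : V := \sum_(i < size s) s`_i *~ p`_i.
Lemma LzD s p q : Lz s (p + q) = Lz s p + Lz s q.
Proof. by rewrite /Lz -big_split; apply: eq_bigr => i _; rewrite coefD mulrzDr. Qed.
Lemma LzN s p : Lz s (- p) = - Lz s p.
Proof. by rewrite /Lz -sumrN; apply: eq_bigr => i _; rewrite coefN mulrNz. Qed.
Lemma LzMn s p n : Lz s (p *+ n) = Lz s p *+ n.
Proof. rewrite /Lz -sumrMnl; apply: eq_bigr => i _; rewrite coefMn -mulr_natr mulrzA mulrz_nat; reflexivity. Qed.
Lemma LzMz s p n : Lz s (p *~ n) = Lz s p *~ n.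
Proof. rewrite /Lz mulrz_suml. apply: eq_bigr => i _.
  by rewrite coefMrz mulrzz mulrzA. Qed.
Lemma Lz0 s : Lz s 0 = 0.
Proof. by rewrite /Lz big1 // => i _; rewrite coef0 mulr0z. Qed.
Lemma LzX s i : (i < size s)%N -> s`_i = Lz s 'X^i.
Proof.
move=> hi; rewrite /Lz (bigD1 (Ordinal hi)) //= coefXn eqxx mulr1z big1 ?addr0 //.
move=> j hj; rewrite coefXn; case: eqP => [ej|]; last by rewrite mulr0z.
by case/eqP: hj; apply: val_inj.
Qed.
End Lin.
Arguments Lz {V}.
Arguments LzX {V}.
Arguments Lz0 {V}.
Arguments LzMz {V}.
Arguments LzMn {V}.
Arguments LzN {V}.
Arguments LzD {V}.

Ltac lin_atoms s l i :=
  lazymatch l with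
  | nil => idtac
  | cons ?a ?l' =>
      let e := fresh "e" in
      pose proof (LzX s i (erefl true)) as e; change (a = Lz s 'X^i) in e;
      rewrite ?e; clear e;
      lin_atoms s l' (S i)
  end.

Ltac lin l :=
  let s := fresh "s" in
  pose s := l;
  lin_atoms s l 0%N;
  repeat (rewrite -?(LzD s) -?(LzN s) -?(LzMn s) -?(LzMz s) -?(Lz0 s));
  apply: (congr1 (Lz s)); cbv [int_of_Z Pos.to_nat Pos.iter_op Nat.add Nat.pred]; rewrite /=; ring.
Lemma iZD (a b : Z) : int_of_Z (a + b)%Z = int_of_Z a + int_of_Z b. Proof. lia. Qed.
Lemma iZM (a b : Z) : int_of_Z (a * b)%Z = int_of_Z a * int_of_Z b. Proof. lia. Qed.
Lemma iZ0 (a : Z) : int_of_Z a = 0 <-> a = Z0. Proof. lia. Qed.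

Definition pt := (Z * Z)%type.
Definition term := (pt * Z)%type.
Definition peqb (p q : pt) := Z.eqb p.1 q.1 && Z.eqb p.2 q.2.
Lemma peqbP p q : reflect (p = q) (peqb p q).
Proof.
case: p q => [a b] [c d]; rewrite /peqb /=.
apply: (iffP andP) => [[/Z.eqb_eq -> /Z.eqb_eq ->] //|[-> ->]].
by split; apply/Z.eqb_eq.
Qed.
Fixpoint cf (s : seq term) (p : pt) : Z :=
  match s with [::] => Z0 | t :: s' => if peqb t.1 p then (t.2 + cf s' p)%Z else cf s' p end.
Definition zform (s : seq term) := all (fun t => Z.eqb (cf s t.1) Z0) s.
Definition scl (s : seq term) (c : Z) : seq term := [seq (u.1, (u.2 * c)%Z) | u <- s].

Section Ev.
Variable Y : zmodType.
Definition ev (F : pt -> Y) (s : seq term) : Y := \sum_(t <- s) F t.1 *~ int_of_Z t.2.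

Lemma ev_cat F s1 s2 : ev F (s1 ++ s2) = ev F s1 + ev F s2.
Proof. by rewrite /ev big_cat. Qed.
Lemma ev_scl F s c : ev F (scl s c) = ev F s *~ int_of_Z c.
Proof. by rewrite /ev big_map mulrz_suml; apply: eq_bigr => u _; rewrite /= iZM mulrzA. Qed.

Lemma ev_split F s p : ev F s = F p *~ int_of_Z (cf s p) + ev F (filter (fun u => ~~ peqb u.1 p) s).
Proof.
elim: s => [|t s IH]; first by rewrite /ev !big_nil /= mulr0z addr0.
rewrite /ev big_cons /= -/(ev F s) IH.
case: (peqbP t.1 p) => [e|ne] /=.
  by rewrite e iZD mulrzDr addrA.
by rewrite big_cons /= -/(ev F _) addrCA.
Qed.

Lemma cf_filter s p q : ~~ peqb q p -> cf (filter (fun u => ~~ peqb u.1 p) s) q = cf s q.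
Proof.
move=> hq; elim: s => [//|t s IH] /=.
case: (peqbP t.1 p) => [e|ne] /=.
  case: (peqbP t.1 q) => [e'|//]; by move: hq; rewrite -e -e'; case: peqbP.
by rewrite IH.
Qed.

Lemma zformP F s : zform s -> ev F s = 0.
Proof.
move: {2}(size s) (leqnn (size s)) => n; elim: n s => [|n IH] [|t s] //=.
- by rewrite /ev big_nil.
- by rewrite /ev big_nil.
move=> hs hz.
rewrite (ev_split F (t :: s) t.1).
have -> : cf (t :: s) t.1 = Z0 by move: hz => /= /andP[/Z.eqb_eq]; rewrite /=.
rewrite mulr0z add0r /=.
have -> : peqb t.1 t.1 by apply/peqbP.
rewrite /=; apply: IH.
  by rewrite size_filter (leq_trans (count_size _ _)).
apply/allP => u; rewrite mem_filter => /andP[hu us].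
rewrite cf_filter //.
move/allP: hz => /(_ u); rewrite inE us orbT /= => /(_ isT).
case: (peqbP t.1 u.1) => // e; by move: hu; rewrite e; case: peqbP.
Qed.

Definition combo {A : Type} (rel : A -> seq term) (cs : seq (A * Z)) : seq term :=
  flatten [seq scl (rel c.1) c.2 | c <- cs].

Lemma combo0 F A rel cs : (forall a : A, ev F (rel a) = 0) -> ev F (combo rel cs) = 0.
Proof.
move=> h; elim: cs => [|c cs IH]; first by rewrite /combo /= /ev big_nil.
by rewrite /combo /= ev_cat -/(combo rel cs) IH ev_scl h mul0rz addr0.
Qed.
End Ev.
Arguments ev {Y}.
Arguments ev_cat {Y}.
Arguments ev_scl {Y}.
Arguments ev_split {Y}.
Arguments zformP {Y}.
Arguments combo0 {Y}.

Lemma derive (R : numFieldType) (Y : lmodType R) (F : pt -> Y) t N s :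
  ev F s = 0 -> zform (scl t N ++ s) -> N <> Z0 -> ev F t = 0.
Proof.
move=> hs hz hN.
have := zformP F _ hz; rewrite ev_cat hs addr0 ev_scl.
rewrite -(@scaler_int R) => /eqP; rewrite scaler_eq0 intr_eq0 => /orP[/eqP/iZ0 //|/eqP //].
Qed.

Set Implicit Arguments. Unset Strict Implicit. Unset Printing Implicit Defensive.

Definition padd (p q : pt) : pt := (Z.add p.1 q.1, Z.add p.2 q.2).
Definition pmul (p : pt) (k : Z) : pt := (Z.mul p.1 k, Z.mul p.2 k).

Section Rels.
Local Open Scope Z_scope.
Definition relE (uv : pt * pt) : seq term :=
  let u := uv.1 in let v := uv.2 in
  [:: (padd u (pmul v 3), 3); (padd (pmul u 3) v, -1); (padd u v, -12);
      (padd u (pmul v (-1)), -12); (u, 16); (v, 16); (pmul v 2, -12); (pmul u 2, 4)].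
Definition relA (uv : pt * pt) : seq term :=
  let u := uv.1 in let v := uv.2 in [:: (padd u v, 1); (u, -1); (v, -1)].
Definition relC (uv : pt * pt) : seq term :=
  let u := uv.1 in let v := uv.2 in
  [:: (padd u (pmul v 2), 1); (padd u v, -3); (u, 3); (padd u (pmul v (-1)), -1); (v, -6)].
End Rels.

Section Vec.
Variable X : zmodType.
Definition vec (x y : X) (p : pt) : X := x *~ int_of_Z p.1 + y *~ int_of_Z p.2.
Lemma vecD x y p q : vec x y (padd p q) = vec x y p + vec x y q.
Proof. by rewrite /vec /= !iZD !mulrzDr addrACA. Qed.
Lemma vecM x y p k : vec x y (pmul p k) = vec x y p *~ int_of_Z k.
Proof. by rewrite /vec /= !iZM !mulrzA mulrzDl. Qed.
End Vec.

Section Link.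
Variables (X Y : zmodType) (f : X -> Y).
Definition Fof (x y : X) (p : pt) : Y := f (vec x y p).
Definition Eexpr (U V : X) : Y :=
  f (U + V *+ 3) *+ 3 - f (U *+ 3 + V)
  - ((f (U + V) + f (U - V)) *+ 12 - (f U + f V) *+ 16 + f (V *+ 2) *+ 12 - f (U *+ 2) *+ 4).
Lemma evE x y u v : ev (Fof x y) (relE (u, v)) = Eexpr (vec x y u) (vec x y v).
Proof.
rewrite /ev !big_cons big_nil /Fof /relE /= !vecD !vecM.
set U := vec x y u; set V := vec x y v.
rewrite /Eexpr.
have -> : V *~ int_of_Z (-1) = - V by rewrite /= mulrN1z.
have -> : V *~ int_of_Z 3 = V *+ 3 by [].
have -> : U *~ int_of_Z 3 = U *+ 3 by [].
have -> : V *~ int_of_Z 2 = V *+ 2 by [].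
have -> : U *~ int_of_Z 2 = U *+ 2 by [].
lin [:: f (U + V *+ 3); f (U *+ 3 + V); f (U + V); f (U - V); f U; f V; f (V *+ 2); f (U *+ 2)].
Qed.
Lemma evA x y u v : ev (Fof x y) (relA (u, v)) = f (vec x y u + vec x y v) - f (vec x y u) - f (vec x y v).
Proof.
rewrite /ev !big_cons big_nil /Fof /relA /= !vecD.
set U := vec x y u; set V := vec x y v.
lin [:: f (U + V); f U; f V].
Qed.
Lemma evC x y u v : ev (Fof x y) (relC (u, v)) =
  f (vec x y u + vec x y v *+ 2) - f (vec x y u + vec x y v) *+ 3 + f (vec x y u) *+ 3
  - f (vec x y u - vec x y v) - f (vec x y v) *+ 6.
Proof.
rewrite /ev !big_cons big_nil /Fof /relC /= !vecD !vecM.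
set U := vec x y u; set V := vec x y v.
have -> : V *~ int_of_Z (-1) = - V by rewrite /= mulrN1z.
have -> : V *~ int_of_Z 2 = V *+ 2 by [].
lin [:: f (U + V *+ 2); f (U + V); f U; f (U - V); f V].
Qed.
End Link.

Lemma ev_add (Y : zmodType) (F1 F2 F : pt -> Y) s :
  (forall p, F p = F1 p + F2 p) -> ev F s = ev F1 s + ev F2 s.
Proof. by move=> h; rewrite /ev -big_split; apply: eq_bigr => t _; rewrite h mulrzDl. Qed.
Section Data.
Local Open Scope Z_scope.
Definition t_T1 : seq term := [:: ((0, 1), 8); ((0, 2), (-1)); ((1, 0), 8); ((1, 1), (-8)); ((2, 0), (-1)); ((2, 2), 1)].
Definition N_T1 : Z := 2592.
Definition cs_T1 : seq ((pt * pt) * Z) := [:: ((((-1), (-2)), (0, 0)), 1782); ((((-1), (-1)), (0, 0)), (-4320)); ((((-1), (-1)), (0, 1)), (-810)); ((((-1), 0), (0, 0)), 3240); ((((-1), 2), (0, 0)), 189); (((0, (-1)), (0, 0)), 1248); (((0, (-1)), (0, 1)), 96); (((0, (-1)), (1, 1)), 216); (((0, 0), ((-1), (-2))), 594); (((0, 0), ((-1), (-1))), (-1440)); (((0, 0), ((-1), 0)), 1080); (((0, 0), ((-1), 2)), 63); (((0, 0), (0, (-1))), 416); (((0, 0), (0, 0)), (-10832)); (((0, 1), ((-1), (-1))), (-270)); (((0, 2), (1, 0)), (-243)); (((1, 0), (0, 2)), (-81))].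

Definition t_T2 : seq term := [:: ((0, 1), 12); ((0, 2), (-6)); ((1, (-1)), 2); ((1, 0), (-6)); ((1, 1), 6); ((1, 2), (-2)); ((2, (-2)), (-1)); ((2, 0), 3); ((2, 2), (-3)); ((2, 4), 1)].
Definition N_T2 : Z := 93312.
Definition cs_T2 : seq ((pt * pt) * Z) := [:: ((((-2), (-1)), (0, 0)), 1080); ((((-2), (-1)), (1, 0)), (-864)); ((((-2), 0), ((-1), (-1))), (-324)); ((((-2), 0), (0, (-1))), (-648)); ((((-2), 0), (0, 1)), 1080); ((((-2), 0), (0, 2)), (-2592)); ((((-2), 1), (0, (-1))), 2592); ((((-2), 1), (0, 0)), (-648)); ((((-1), (-2)), (0, 0)), (-31752)); ((((-1), (-1)), ((-2), 0)), (-108)); ((((-1), (-1)), ((-1), 1)), (-3456)); ((((-1), (-1)), (0, 0)), 38880); ((((-1), (-1)), (0, 1)), 5292); ((((-1), (-1)), (1, 0)), (-1728)); ((((-1), 0), ((-1), 0)), 5184); ((((-1), 0), (0, (-2))), (-675)); ((((-1), 0), (0, (-1))), (-1944)); ((((-1), 0), (0, 0)), 1560); ((((-1), 0), (0, 2)), (-684)); ((((-1), 0), (1, 0)), 38496); ((((-1), 1), (0, (-1))), 27252); ((((-1), 1), (0, 0)), 32724); ((((-1), 1), (1, 0)), 2880); ((((-1), 1), (1, 1)), (-31104)); ((((-1), 2), (0, 0)), (-56538)); ((((-1), 2), (1, 0)), (-7776)); (((0, (-2)), ((-1), 0)), (-2025)); (((0, (-2)), (1, 0)), 8748); (((0, (-1)),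 ((-2), 0)), (-216)); (((0, (-1)), ((-1), 0)), (-5832)); (((0, (-1)), ((-1), 1)), 10908); (((0, (-1)), (0, 0)), 112800); (((0, (-1)), (0, 1)), (-11040)); (((0, (-1)), (1, 1)), 5832); (((0, 0), ((-2), (-1))), 360); (((0, 0), ((-2), 1)), (-216)); (((0, 0), ((-1), (-2))), (-10584)); (((0, 0), ((-1), (-1))), 12960); (((0, 0), ((-1), 0)), 520); (((0, 0), ((-1), 1)), 10908); (((0, 0), ((-1), 2)), (-18846)); (((0, 0), (0, (-1))), 37600); (((0, 0), (0, 0)), (-420704)); (((0, 1), ((-2), 0)), 360); (((0, 1), ((-1), (-1))), 3564); (((0, 1), (0, 1)), (-15552)); (((0, 1), (1, (-1))), (-7776)); (((0, 2), ((-1), 0)), (-2052)); (((0, 2), (1, 0)), (-6561)); (((1, 0), (0, (-2))), 2916); (((1, 0), (0, 2)), (-2187))].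

Definition t_T3 : seq term := [:: ((1, 0), 16); ((2, 0), (-10)); ((4, 0), 1)].
Definition N_T3 : Z := 2.
Definition cs_T3 : seq ((pt * pt) * Z) := [:: (((0, 0), (0, 0)), (-6)); (((1, 0), (1, 0)), (-1))].

Definition t_AE : seq term := [:: ((0, 1), 16); ((0, 2), (-12)); ((1, (-1)), (-12)); ((1, 0), 16); ((1, 1), (-12)); ((1, 3), 3); ((2, 0), 4); ((3, 1), (-1))].
Definition N_AE : Z := 1.
Definition cs_AE : seq ((pt * pt) * Z) := [:: (((0, (-1)), (0, 1)), (-12)); (((0, (-1)), (1, 0)), 12); (((0, 0), (0, 0)), (-12)); (((0, 1), (0, 1)), 12); (((0, 1), (1, 0)), 9); (((0, 1), (1, 1)), (-3)); (((0, 1), (1, 2)), (-3)); (((0, 1), (2, 0)), 1); (((1, 0), (1, 0)), (-3)); (((1, 0), (2, 1)), 1)].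

Definition t_CE : seq term := [:: ((0, 1), 16); ((0, 2), (-12)); ((1, (-1)), (-12)); ((1, 0), 16); ((1, 1), (-12)); ((1, 3), 3); ((2, 0), 4); ((3, 1), (-1))].
Definition N_CE : Z := 6.
Definition cs_CE : seq ((pt * pt) * Z) := [:: ((((-1), 0), (1, (-1))), (-6)); ((((-1), 0), (1, 0)), 7); (((0, (-1)), (0, 1)), (-15)); (((0, 0), ((-1), 0)), 7); (((0, 0), (0, (-1))), (-15)); (((0, 0), (0, 0)), 24); (((0, 0), (0, 1)), 72); (((0, 0), (1, 0)), (-24)); (((0, 1), ((-1), 0)), (-6)); (((0, 1), (1, 0)), 18); (((1, 0), (0, (-1))), 6); (((1, 0), (0, 1)), (-54)); (((1, 1), (0, 1)), (-18)); (((1, 1), (1, 0)), 6)].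

End Data.

Section Fwd.
Variables (R : realType) (X Y : lmodType R) (f : X -> Y).
Hypothesis HE : forall x y : X, f (x + y *+ 3) *+ 3 - f (x *+ 3 + y)
     = (f (x + y) + f (x - y)) *+ 12 - (f x + f y) *+ 16
       + f (y *+ 2) *+ 12 - f (x *+ 2) *+ 4.
Lemma hE x y : forall uv, ev (Fof f x y) (relE uv) = 0.
Proof. case=> u v; rewrite evE; apply/eqP; rewrite subr_eq0; apply/eqP; exact: HE. Qed.
Lemma T1ev x y : ev (Fof f x y) t_T1 = 0.
Proof.
apply: (@derive R Y (Fof f x y) t_T1 N_T1 (combo relE cs_T1)); first exact: combo0 (hE x y).
  by vm_compute.
by rewrite /N_T1.
Qed.

Lemma T1 x y : f ((x + y) *+ 2) - f (x + y) *+ 8 = (f (x *+ 2) - f x *+ 8) + (f (y *+ 2) - f y *+ 8).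
Proof.
have H := T1ev x y.
rewrite /ev /t_T1 !big_cons big_nil in H; cbn [fst snd] in H.
have e0 : Fof f x y (Z0, (Zpos 1%positive)) = f (y) by rewrite /Fof /vec; congr f; lin [:: x; y].
have e1 : Fof f x y (Z0, (Zpos 2%positive)) = f (y *+ 2) by rewrite /Fof /vec; congr f; lin [:: x; y].
have e2 : Fof f x y ((Zpos 1%positive), Z0) = f (x) by rewrite /Fof /vec; congr f; lin [:: x; y].
have e3 : Fof f x y ((Zpos 1%positive), (Zpos 1%positive)) = f (x + y) by rewrite /Fof /vec; congr f; lin [:: x; y].
have e4 : Fof f x y ((Zpos 2%positive), Z0) = f (x *+ 2) by rewrite /Fof /vec; congr f; lin [:: x; y].
have e5 : Fof f x y ((Zpos 2%positive), (Zpos 2%positive)) = f ((x + y) *+ 2) by rewrite /Fof /vec; congr f; lin [:: x; y].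
rewrite e0 e1 e2 e3 e4 e5 in H.
apply/eqP; rewrite -subr_eq0; apply/eqP; rewrite -H; lin [:: f (y); f (y *+ 2); f (x); f (x + y); f (x *+ 2); f ((x + y) *+ 2)].
Qed.

Lemma T2ev x y : ev (Fof f x y) t_T2 = 0.
Proof.
apply: (@derive R Y (Fof f x y) t_T2 N_T2 (combo relE cs_T2)); first exact: combo0 (hE x y).
  by vm_compute.
by rewrite /N_T2.
Qed.

Lemma T2 x y : (f ((x + y *+ 2) *+ 2) - f (x + y *+ 2) *+ 2) - (f ((x + y) *+ 2) - f (x + y) *+ 2) *+ 3 + (f (x *+ 2) - f x *+ 2) *+ 3 - (f ((x - y) *+ 2) - f (x - y) *+ 2) = (f (y *+ 2) - f y *+ 2) *+ 6.
Proof.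
have H := T2ev x y.
rewrite /ev /t_T2 !big_cons big_nil in H; cbn [fst snd] in H.
have e0 : Fof f x y (Z0, (Zpos 1%positive)) = f (y) by rewrite /Fof /vec; congr f; lin [:: x; y].
have e1 : Fof f x y (Z0, (Zpos 2%positive)) = f (y *+ 2) by rewrite /Fof /vec; congr f; lin [:: x; y].
have e2 : Fof f x y ((Zpos 1%positive), (Zneg 1%positive)) = f (x - y) by rewrite /Fof /vec; congr f; lin [:: x; y].
have e3 : Fof f x y ((Zpos 1%positive), Z0) = f (x) by rewrite /Fof /vec; congr f; lin [:: x; y].
have e4 : Fof f x y ((Zpos 1%positive), (Zpos 1%positive)) = f (x + y) by rewrite /Fof /vec; congr f; lin [:: x; y].
have e5 : Fof f x y ((Zpos 1%positive), (Zpos 2%positive)) = f (x + y *+ 2) by rewrite /Fof /vec; congr f; lin [:: x; y].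
have e6 : Fof f x y ((Zpos 2%positive), (Zneg 2%positive)) = f ((x - y) *+ 2) by rewrite /Fof /vec; congr f; lin [:: x; y].
have e7 : Fof f x y ((Zpos 2%positive), Z0) = f (x *+ 2) by rewrite /Fof /vec; congr f; lin [:: x; y].
have e8 : Fof f x y ((Zpos 2%positive), (Zpos 2%positive)) = f ((x + y) *+ 2) by rewrite /Fof /vec; congr f; lin [:: x; y].
have e9 : Fof f x y ((Zpos 2%positive), (Zpos 4%positive)) = f ((x + y *+ 2) *+ 2) by rewrite /Fof /vec; congr f; lin [:: x; y].
rewrite e0 e1 e2 e3 e4 e5 e6 e7 e8 e9 in H.
apply/eqP; rewrite -subr_eq0; apply/eqP; rewrite -H; lin [:: f (y); f (y *+ 2); f (x - y); f (x); f (x + y); f (x + y *+ 2); f ((x - y) *+ 2); f (x *+ 2); f ((x + y) *+ 2); f ((x + y *+ 2) *+ 2)].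
Qed.

Lemma T3ev x y : ev (Fof f x y) t_T3 = 0.
Proof.
apply: (@derive R Y (Fof f x y) t_T3 N_T3 (combo relE cs_T3)); first exact: combo0 (hE x y).
  by vm_compute.
by rewrite /N_T3.
Qed.

Lemma T3 x : f (x *+ 4) = f (x *+ 2) *+ 10 - f x *+ 16.
Proof.
have H := T3ev x x.
rewrite /ev /t_T3 !big_cons big_nil in H; cbn [fst snd] in H.
have e0 : Fof f x x ((Zpos 1%positive), Z0) = f (x) by rewrite /Fof /vec; congr f; lin [:: x].
have e1 : Fof f x x ((Zpos 2%positive), Z0) = f (x *+ 2) by rewrite /Fof /vec; congr f; lin [:: x].
have e2 : Fof f x x ((Zpos 4%positive), Z0) = f (x *+ 4) by rewrite /Fof /vec; congr f; lin [:: x].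
rewrite e0 e1 e2 in H.
apply/eqP; rewrite -subr_eq0; apply/eqP; rewrite -H; lin [:: f (x); f (x *+ 2); f (x *+ 4)].
Qed.

End Fwd.


Lemma vec10 (X : zmodType) (x y : X) : vec x y (Zpos 1%positive, Z0) = x.
Proof. rewrite /vec; lin [:: x; y]. Qed.
Lemma vec01 (X : zmodType) (x y : X) : vec x y (Z0, Zpos 1%positive) = y.
Proof. rewrite /vec; lin [:: x; y]. Qed.

Theorem theorem2p3 (R : realType) (X Y : lmodType R) (f : X -> Y) :
  (forall x y : X,
     f (x + y *+ 3) *+ 3 - f (x *+ 3 + y)
     = (f (x + y) + f (x - y)) *+ 12 - (f x + f y) *+ 16
       + f (y *+ 2) *+ 12 - f (x *+ 2) *+ 4)
  <->
  (exists A H C G : X -> Y,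
     [/\ additive_fun A, additive_fun H, cubic_fun C, cubic_fun G &
         [/\ (forall x, f x = H x + G x),
             (forall x, H x = A (x *+ 2) - A x *+ 8) &
             (forall x, G x = C (x *+ 2) - C x *+ 2)]]).
Proof.
have n6 : (6 : R) != 0 by rewrite pnatr_eq0.
have n36 : (36 : R) != 0 by rewrite pnatr_eq0.
split.
- move=> HE.
  pose g := fun z => f (z *+ 2) - f z *+ 8.
  pose h := fun z => f (z *+ 2) - f z *+ 2.
  have gA : additive_fun g by move=> x y; exact: (T1 HE x y).
  have hC : cubic_fun h by move=> x y; exact: (T2 HE x y).
  have h2 : forall x, h (x *+ 2) = h x *+ 8.
    move=> x; rewrite /h.
    have e : (x *+ 2) *+ 2 = x *+ 4 by lin [:: x].
    rewrite e (T3 HE x); lin [:: f (x *+ 2); f x].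
  have g2 : forall x, g (x *+ 2) = g x + g x by move=> x; rewrite mulr2n gA.
  exists (fun z => (36 : R)^-1 *: g z), (fun z => - (6 : R)^-1 *: g z),
         (fun z => (36 : R)^-1 *: h z), (fun z => (6 : R)^-1 *: h z).
  split.
  + by move=> x y; rewrite gA scalerDr.
  + by move=> x y; rewrite gA scalerDr.
  + move=> x y /=; rewrite !scalerMnr -scalerBr -scalerDr -scalerBr.
    by rewrite (hC x y).
  + move=> x y /=; rewrite !scalerMnr -scalerBr -scalerDr -scalerBr.
    by rewrite (hC x y).
  split.
  + move=> x; rewrite scaleNr addrC -scalerBr.
    have -> : h x - g x = 6 *: f x by rewrite /h /g scaler_nat; lin [:: f (x *+ 2); f x].
    by rewrite scalerA mulVf // scale1r.
  + move=> x; rewrite /= g2 scalerMnr -scalerBr.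
    have -> : g x + g x - g x *+ 8 = (- 6 : R) *: g x by rewrite scaleNr scaler_nat; lin [:: g x].
    rewrite scalerA; congr (_ *: _); field.
    done.
  + move=> x; rewrite /= h2 scalerMnr -scalerBr.
    have -> : h x *+ 8 - h x *+ 2 = 6 *: h x by rewrite scaler_nat; lin [:: h x].
    rewrite scalerA; congr (_ *: _); field.
    done.
- case=> [A [H [C [G [hA hH hC hG [hf _ _]]]]]] x y.
  have eA : forall uv, ev (Fof H x y) (relA uv) = 0.
    case=> u v; rewrite evA hH.
    lin [:: H (vec x y u); H (vec x y v)].
  have eC : forall uv, ev (Fof G x y) (relC uv) = 0.
    by case=> u v; rewrite evC hG subrr.
  have E1 : ev (Fof H x y) (relE ((Zpos 1%positive, Z0), (Z0, Zpos 1%positive))) = 0.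
    apply: (@derive R Y (Fof H x y) _ N_AE (combo relA cs_AE)); first exact: combo0 eA.
      by vm_compute.
    by rewrite /N_AE.
  have E2 : ev (Fof G x y) (relE ((Zpos 1%positive, Z0), (Z0, Zpos 1%positive))) = 0.
    apply: (@derive R Y (Fof G x y) _ N_CE (combo relC cs_CE)); first exact: combo0 eC.
      by vm_compute.
    by rewrite /N_CE.
  have : ev (Fof f x y) (relE ((Zpos 1%positive, Z0), (Z0, Zpos 1%positive))) = 0.
    rewrite (@ev_add _ (Fof H x y) (Fof G x y)) ?E1 ?E2 ?addr0 //.
    by move=> p; rewrite /Fof hf.
  rewrite evE vec10 vec01 => /eqP; rewrite subr_eq0 => /eqP.
  done.
Qed.
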